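(* Let $r\ge 2$ and $t\ge1$ be integers and let $m$ be a positive integer with $t\le 2^m-1$. Let $\mathcal C_t^{(m)}$ be the binary linear code, with coordinates indexed by $\Omega_t^{(m)}$, having parity-check matrix $H_t^{(m)}$. Then $\mathcal C_t^{(m)}$ is an $(n,k,r,t)$-SLRC with $$n=r^m\sum_{s=0}^t\frac{1}{r^{|\mathrm{supp}_m(s)|}},\qquad k=r^m,$$ so that its rate is $\frac{k}{n}=\Big(\sum_{s=0}^t r^{-|\mathrm{supp}_m(s)|}\Big)^{-1}$.
   Context: Let $\mathbb Z_r=\{0,1,\dots,r-1\}$ and $\mathbb Z_{r+1}=\{0,1,\dots,r\}$, regarded merely as sets (so $\mathbb Z_r\subseteq\mathbb Z_{r+1}$). Elements of $\mathbb Z_{r+1}^m$ are written $\alpha=(i_m,i_{m-1},\dots,i_1)$; $i_\ell$ is the $\ell$-th coordinate from the right. Define $\mathbf U(\alpha)=\{\ell\in[m]: i_\ell=r\}$, $\mathbf T(\alpha)=\{\ell\in[m]: i_\ell\in\mathbb Z_r\}$ and $\mathcal L(\alpha)=\{(j_m,\dots,j_1)\in\mathbb Z_r^m: j_\ell=i_\ell \text{ for all }\ell\in\mathbf T(\alpha)\}$. For an integer $0\le s\le 2^m-1$ write $s=\sum_{\ell=1}^m\lambda_\ell2^{\ell-1}$ with $\lambda_\ell\in\{0,1\}$ and set $\mathrm{supp}_m(s)=\{\ell:\lambda_\ell=1\}$. Let $\Gamma_s^{(m)}=\{\alpha\in\mathbb Z_{r+1}^m:\mathbf U(\alpha)=\mathrm{supp}_m(s)\}$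 and $\Omega_s^{(m)}=\bigcup_{\ell=0}^s\Gamma_\ell^{(m)}$ (so $\Omega_0^{(m)}=\mathbb Z_r^m$). $H_t^{(m)}=(h_{\alpha,\beta})$ is the binary matrix with rows indexed by $\Omega_t^{(m)}\setminus\Omega_0^{(m)}$, columns indexed by $\Omega_t^{(m)}$, and $h_{\alpha,\beta}=1$ if $\beta\in\mathcal L(\alpha)\cup\{\alpha\}$, $h_{\alpha,\beta}=0$ otherwise. For a linear code $\mathcal C$ of length $n$ over a field $\mathbb F$ with coordinate set $I$ ($|I|=n$), a recovering set of a coordinate $i$ is a set $R\subseteq I\setminus\{i\}$ such that there are nonzero $a_j\in\mathbb F$ ($j\in R$) with $x_i=\sum_{j\in R}a_jx_j$ for all codewords $x$. $\mathcal C$ (of dimension $k$) is an $(n,k,r,t)$-SLRC if for every $E\subseteq I$ with $|E|\le t$, $E$ can be indexed as $\{i_1,\dots,i_{|E|}\}$ such that each $i_\ell$ has a recovering set $R_\ell\subseteq(I\setminus E)\cup\{i_1,\dots,i_{\ell-1}\}$ with $|R_\ell|\le r$. *)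

(* Defs.v *)
From HB Require Import structures.
From mathcomp Require Import all_boot all_order all_algebra.
Set Implicit Arguments. Unset Strict Implicit. Unset Printing Implicit Defensive.
Import Order.TTheory GRing.Theory Num.Theory.
Local Open Scope ring_scope.

Definition recovering_set (F : fieldType) (I : finType)
    (C : {vspace {ffun I -> F^o}}) (i : I) (R : {set I}) : Prop :=
  i \notin R /\
  exists a : I -> F, (forall j, j \in R -> a j != 0) /\
    (forall x : {ffun I -> F^o}, x \in C -> x i = \sum_(j in R) a j * x j).

Definition seq_recoverable (F : fieldType) (I : finType)
    (C : {vspace {ffun I -> F^o}}) (r t : nat) : Prop :=
  forall E : {set I}, (#|E| <= t)%N ->
    exists s : seq I, [/\ uniq s, s =i E &
      forall (s1 s2 : seq I) (i : I), s = s1 ++ i :: s2 ->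
        exists R : {set I},
          [/\ R \subset (~: E) :|: [set x in s1], (#|R| <= r)%N &
              recovering_set C i R]].

Definition is_SLRC (F : fieldType) (I : finType)
    (C : {vspace {ffun I -> F^o}}) (n k r t : nat) : Prop :=
  [/\ #|I| = n, \dim C = k & seq_recoverable C r t].

(* Z_{r+1}^m : alpha = (i_m, ..., i_1) is represented as alpha : 'I_m -> 'I_(r+1)
   with alpha (l-1) = i_l. The value r is ord_max. *)
Definition word (m r : nat) := {ffun 'I_m -> 'I_r.+1}.

(* U(alpha) (shifted by one: l-1 in U alpha iff i_l = r) *)
Definition Uset m r (a : word m r) : {set 'I_m} := [set l | a l == ord_max].
Definition Tset m r (a : word m r) : {set 'I_m} := [set l | a l != ord_max].

Definition Lset m r (a : word m r) : {set word m r} :=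
  [set b : word m r | [forall l, b l != ord_max] &&
                      [forall l in Tset a, b l == a l]].

(* supp_m(s) (shifted: l-1 in supp s iff lambda_l = 1) *)
Definition supp m (s : nat) : {set 'I_m} := [set l : 'I_m | odd (s %/ 2 ^ l)].

Definition Gamma m r (s : nat) : {set word m r} := [set a | Uset a == supp m s].
Definition Omega m r (t : nat) : {set word m r} := \bigcup_(s < t.+1) Gamma m r s.

Notation GF2 := 'F_2.
Definition coord m r t := {a : word m r | a \in Omega m r t}.

Definition Hmat m r t (a b : word m r) : 'F_2 :=
  if (a \in Omega m r t :\: Omega m r 0) && (b \in Omega m r t) &&
     ((b \in Lset a) || (b == a)) then 1 else 0.

(* the code C_t^(m): kernel of H_t^(m), i.e. the x in F_2^(Omega_t) with
   sum_beta h_(alpha,beta) x_beta = 0 for every row alpha in Omega_t \ Omega_0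
   (for alpha in Omega_0 the map below gives 0 since Hmat vanishes there). *)
Definition syndrome m r t (x : {ffun coord m r t -> GF2^o}) : {ffun coord m r t -> GF2^o} :=
  [ffun a : coord m r t =>
     (\sum_(b : coord m r t) @Hmat m r t (val a) (val b) * x b : GF2^o)].

Definition Ccode m r t : {vspace {ffun coord m r t -> GF2^o}} :=
  lker (linfun (@syndrome m r t)).

(* Main.v *)
Require Import Defs.
From HB Require Import structures.
From mathcomp Require Import all_boot all_order all_algebra.
From mathcomp Require Import zify.
From Stdlib Require Import Classical.
Import Order.TTheory GRing.Theory Num.Theory.
Set Implicit Arguments. Unset Strict Implicit. Unset Printing Implicit Defensive.

Definition bsum (b : nat -> bool) n := (\sum_(i < n) b i * 2 ^ i)%N.

Lemma bsumS b n : bsum b n.+1 = (b 0 + 2 * bsum (fun i => b i.+1) n)%N.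
Proof.
rewrite /bsum big_ord_recl /= expn0 muln1 big_distrr /=; congr (_ + _)%N.
by apply: eq_bigr => i _; rewrite expnS mulnCA.
Qed.

Lemma bsum_bit b n l : odd (bsum b n %/ 2 ^ l) = (l < n) && b l.
Proof.
elim: l b n => [|l IH] b [|n].
- by rewrite /bsum big_ord0.
- by rewrite expn0 divn1 bsumS oddD mul2n odd_double; case: (b 0).
- by rewrite /bsum big_ord0 div0n.
- rewrite expnS divnMA bsumS.
  have -> : ((b 0 + 2 * bsum (fun i => b i.+1) n) %/ 2 = bsum (fun i => b i.+1) n)%N.
    by rewrite mulnC divnDMl // divn_small ?add0n //; case: (b 0).
  by rewrite IH.
Qed.

Lemma bsum_odd s n : (s < 2 ^ n)%N -> bsum (fun i => odd (s %/ 2 ^ i)) n = s.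
Proof.
elim: n s => [|n IH] s hs.
- by rewrite /bsum big_ord0; move: hs; rewrite expn0; case: s.
- rewrite bsumS expn0 divn1.
  have -> : bsum (fun i => odd (s %/ 2 ^ i.+1)) n = bsum (fun i => odd ((s %/ 2) %/ 2 ^ i)) n.
    by apply: eq_bigr => i _; rewrite expnS divnMA.
  rewrite IH; first by rewrite divn2 -{3}(odd_double_half s) -muln2 mulnC.
  by rewrite ltn_divLR // -expnSr.
Qed.

Lemma bsum_lt b n : (bsum b n < 2 ^ n)%N.
Proof.
elim: n b => [|n IH] b; first by rewrite /bsum big_ord0.
rewrite bsumS expnS; have := IH (fun i => b i.+1); case: (b 0) => /= h; lia.
Qed.
Definition idxk m r k (p : word m r) := (\sum_(i < m) ((i < k) && (p i == ord_max)) * 2 ^ i)%N.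

Definition bw m r (p : word m r) (i : nat) := [exists l : 'I_m, (val l == i) && (p l == ord_max)].

Lemma bw_ord m r (p : word m r) (i : 'I_m) : bw p i = (p i == ord_max).
Proof.
apply/existsP/idP => [[l /andP[/eqP/val_inj -> //]]|h]; by exists i; rewrite eqxx.
Qed.

Lemma idx_bsum m r (p : word m r) : idxk m p = bsum (bw p) m.
Proof. by apply: eq_bigr => i _; rewrite ltn_ord bw_ord. Qed.

Lemma supp_idx m r (p : word m r) : supp m (idxk m p) = Uset p.
Proof.
by apply/setP => l; rewrite !inE idx_bsum bsum_bit ltn_ord bw_ord.
Qed.

Lemma idx_supp m r (p : word m r) s : (s < 2 ^ m)%N -> Uset p = supp m s -> idxk m p = s.
Proof.
move=> hs hU; rewrite idx_bsum -(bsum_odd hs); apply: eq_bigr => i _.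
have := congr1 (fun A : {set 'I_m} => i \in A) hU; rewrite /= !inE => <-; by rewrite bw_ord.
Qed.

Lemma inOmega m r t (p : word m r) : (t < 2 ^ m)%N -> (p \in Omega m r t) = (idxk m p <= t)%N.
Proof.
move=> ht; apply/bigcupP/idP => [[s _ ]|h].
- have hs : (s <= t)%N by rewrite -ltnS.
  rewrite inE => /eqP hU; rewrite (idx_supp _ hU) //; exact: leq_ltn_trans ht.
- exists (Ordinal (h : idxk m p < t.+1)%N) => //.
  by rewrite inE /= supp_idx.
Qed.

Definition upd m r (p : word m r) (l : 'I_m) (j : 'I_r.+1) : word m r :=
  [ffun k => if k == l then j else p k].
Definition agree m r (p q : word m r) (l : 'I_m) := [forall k, (k != l) ==> (p k == q k)].

Lemma upd_id m r (p : word m r) l : upd p l (p l) = p.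
Proof. by apply/ffunP => k; rewrite ffunE; case: eqP => // ->. Qed.

Lemma agree_upd m r (p : word m r) l j : agree (upd p l j) p l.
Proof. by apply/forallP => k; apply/implyP => hk; rewrite ffunE (negbTE hk). Qed.

Lemma agree_sym m r (p q : word m r) l : agree p q l -> agree q p l.
Proof. by move=> /forallP h; apply/forallP => k; apply/implyP => hk; rewrite eq_sym (implyP (h k) hk). Qed.

Lemma agree_eq m r (p q : word m r) l : agree p q l -> p l = q l -> p = q.
Proof.
move=> /forallP h hl; apply/ffunP => k; case: (eqVneq k l) => [->//|hk].
by apply/eqP; move: (h k); rewrite hk.
Qed.

Lemma idxk0 m r (p : word m r) : idxk 0 p = 0%N.
Proof. by rewrite /idxk big1. Qed.

Lemma idxkS m r k (p : word m r) (hk : (k < m)%N) :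
  idxk k.+1 p = (idxk k p + (p (Ordinal hk) == ord_max) * 2 ^ k)%N.
Proof.
rewrite /idxk (bigD1 (Ordinal hk)) //= (bigD1 (Ordinal hk) (P := predT)) //=.
rewrite leqnn ltnn /= add0n addnC; congr (_ + _)%N.
apply: eq_bigr => i hi; rewrite ltnS leq_eqVlt.
by have -> : (nat_of_ord i == k) = false by apply/negP => /eqP h; move: hi; apply/negP/negPn/eqP/val_inj.
Qed.

Lemma idxk_lt m r k (p : word m r) : (k <= m)%N -> (idxk k p < 2 ^ k)%N.
Proof.
elim: k => [|k IH] hk; first by rewrite idxk0.
rewrite (idxkS p hk) expnS; have := IH (ltnW hk); case: (_ == _) => /= h; lia.
Qed.

Lemma idx_agree m r k (p q : word m r) l : agree p q l ->
  (idxk k p + ((l < k) && (q l == ord_max)) * 2 ^ l =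
   idxk k q + ((l < k) && (p l == ord_max)) * 2 ^ l)%N.
Proof.
move=> /forallP h; rewrite /idxk (bigD1 l) //= (bigD1 l (P := predT)) //=.
rewrite (eq_bigr (fun i : 'I_m => ((i < k) && (q i == ord_max)) * 2 ^ i)%N); first by lia.
move=> i hi; have := h i; rewrite hi /= => /eqP ->; done.
Qed.

Definition closedk m r k t (W : {set word m r}) :=
  forall p, p \in W -> forall l : 'I_m, (l < k)%N -> (idxk k (upd p l ord_max) <= t)%N ->
  exists2 q, q \in W & (q != p) && agree q p l.

Definition slice m r (W : {set word m r}) (L : 'I_m) (j : 'I_r.+1) :=
  [set p in W | p L == j].

Lemma two_slices m r (W : {set word m r}) L j j' : j != j' ->
  (#|slice W L j| + #|slice W L j'| <= #|W|)%N.
Proof.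
move=> hj; rewrite -[X in (X <= _)%N]subn0.
have <- : #|slice W L j :&: slice W L j'| = 0%N.
  apply/eqP; rewrite cards_eq0; apply/eqP/setP => p; rewrite !inE.
  by apply/negP => /andP[/andP[_ /eqP->] /andP[_ /eqP/eqP]]; rewrite (negbTE hj).
rewrite -cardsU; apply: subset_leq_card; apply/subsetP => p.
by rewrite !inE => /orP[]/andP[].
Qed.

Lemma slice_closed m r k (hk : (k < m)%N) t t2 (W : {set word m r}) j :
  closedk k.+1 t W -> (t2 + (j == ord_max) * 2 ^ k <= t)%N ->
  closedk k t2 (slice W (Ordinal hk) j).
Proof.
move=> hW ht p; rewrite inE => /andP[pW /eqP pj] l hl hidx.
have hlL : l != Ordinal hk by apply/negP => /eqP/(congr1 val) /= hl'; move: hl; rewrite hl' ltnn.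
have [|q qW /andP[qp aq]] := hW p pW l (ltnW hl).
  rewrite (idxkS _ hk) ffunE [Ordinal hk == l]eq_sym (negbTE hlL) pj.
  by apply: leq_trans ht; rewrite leq_add2r.
exists q => //; last by rewrite qp.
rewrite inE qW /=; move/forallP: aq => /(_ (Ordinal hk)); rewrite eq_sym hlL /= => /eqP ->.
by rewrite pj.
Qed.

Lemma ar1 (a b c : nat) : (0 < c)%N -> (a + c = b)%N -> (b <= a)%N -> false.
Proof. lia. Qed.
Lemma ar2 (t a b c d : nat) : (t < 2 * c)%N -> (c <= a)%N -> (c <= b)%N -> (a + b <= d)%N -> (t < d)%N.
Proof. lia. Qed.

Lemma count_key m r k : (k <= m)%N -> forall t (W : {set word m r}), (t < 2 ^ k)%N ->
  (forall p, p \in W -> (idxk k p <= t)%N) -> closedk k t W -> W != set0 -> (t < #|W|)%N.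
Proof.
elim: k => [|k IH] hk t W ht hb hc hne.
  by move: ht; rewrite expn0 ltnS leqn0 => /eqP ->; rewrite card_gt0.
set L := Ordinal hk.
have IHk := IH (ltnW hk).
have factA : (2 ^ k <= t)%N -> forall j, j != ord_max -> slice W L j != set0 ->
    (2 ^ k <= #|slice W L j|)%N.
  move=> h2 j hj hne'; have := IHk (2 ^ k).-1 (slice W L j).
  rewrite prednK ?expn_gt0 //; apply => //.
  - by move=> p _; rewrite -ltnS prednK ?expn_gt0 // idxk_lt // ltnW.
  - apply: slice_closed hc _; rewrite (negbTE hj) mul0n addn0.
    by apply: leq_trans h2; rewrite leq_pred.
case: (ltnP t (2 ^ k)) => htk.
- have [p0 p0W] : exists p0, p0 \in W by apply/set0Pn.
  set j := p0 L.
  have hjm : j != ord_max.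
    apply/negP => /eqP hj; have := hb p0 p0W; rewrite (idxkS _ hk) -/L -/j hj eqxx mul1n.
    by move=> h; move: htk; rewrite ltnNge (leq_trans (leq_addl _ _) h).
  have := IHk t (slice W L j) htk.
  have hs : (#|slice W L j| <= #|W|)%N.
    by apply: subset_leq_card; apply/subsetP => p; rewrite inE => /andP[].
  move=> H; apply: leq_trans hs; apply: H.
  + move=> p; rewrite inE => /andP[pW /eqP pj]; have := hb p pW.
    by rewrite (idxkS _ hk); apply: leq_trans; apply: leq_addr.
  + by apply: slice_closed hc _; rewrite (negbTE hjm) mul0n addn0.
  + by apply/set0Pn; exists p0; rewrite inE p0W /=.
- case: (boolP [exists p in W, p L == ord_max]) => [/existsP[p /andP[pW /eqP pL]]|hno].
  + have h1 : (t - 2 ^ k < #|slice W L ord_max|)%N.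
      apply: IHk; first by move: ht; rewrite expnS; lia.
      * move=> p'; rewrite inE => /andP[pW' /eqP pL']; have := hb p' pW'.
        by rewrite (idxkS _ hk) -/L pL' eqxx mul1n leq_subRL ?(leq_trans htk) // addnC.
      * by apply: slice_closed hc _; rewrite eqxx mul1n subnK.
      * by apply/set0Pn; exists p; rewrite inE pW pL /=.
    have [|q qW /andP[qp aq]] := hc p pW L (ltnSn k).
      by rewrite -pL upd_id; apply: hb.
    have hqL : q L != ord_max.
      by apply/negP => /eqP e; move: qp; rewrite (agree_eq aq) ?eqxx // e pL.
    have h2 : (2 ^ k <= #|slice W L (q L)|)%N.
      by apply: factA => //; apply/set0Pn; exists q; rewrite inE qW /=.
    have := two_slices W L (j := ord_max) (j' := q L); rewrite eq_sym => /(_ hqL).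
    by move: h1 h2; lia.
  + have [p0 p0W] : exists p0, p0 \in W by apply/set0Pn.
    set j := p0 L.
    have noMax : forall p, p \in W -> p L != ord_max.
      by move=> p pW; apply/negP => e; move/negP: hno; apply; apply/existsP; exists p; rewrite pW.
    have p0S : p0 \in slice W L j by rewrite /slice inE p0W /j eqxx.
    case: (arg_minnP (fun p => idxk k p) p0S) => p' p'S hmin.
    have : p' \in slice W L j by []. rewrite /slice inE => /andP[p'W /eqP p'j].
    have h0 : idxk k p' = 0%N.
      apply/eqP; apply: contraT => hpos.
      have [l /andP[hl hpl]] : exists l : 'I_m, (l < k)%N && (p' l == ord_max).
        apply/existsP; apply: contraR hpos => /existsPn hn.
        by apply/eqP; rewrite /idxk big1 // => i _; rewrite (negbTE (hn i)).
      have [|q qW /andP[qp aq]] := hc p' p'W l (ltnW hl).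
        by rewrite -(eqP hpl) upd_id; apply: hb.
      have hql : q l != ord_max.
        by apply/negP => /eqP e; move: qp; rewrite (agree_eq aq) ?eqxx // e (eqP hpl).
      have hlL : L != l.
        by apply/negP => /eqP e; move: hl; rewrite -e /= ltnn.
      have qS : q \in slice W L j.
        rewrite /slice inE qW /=; move/forallP: aq => /(_ L); rewrite hlL /= => /eqP ->.
        by rewrite p'j.
      have := hmin q qS; have := idx_agree k aq; rewrite hl hpl (negbTE hql) /= mul1n mul0n addn0.
      have := expn_gt0 2 l; exact: ar1.
    have [|q qW /andP[qp aq]] := hc p' p'W L (ltnSn k).
      rewrite (idxkS _ hk) -/L ffunE eqxx eqxx mul1n.
      have := idx_agree k (agree_upd p' L ord_max); rewrite /= ltnn /= !addn0 => ->.
      by rewrite h0 add0n.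
    have hqj : q L != j.
      by apply/negP => /eqP e; move: qp; rewrite (agree_eq aq) ?eqxx // e p'j.
    have hjm : j != ord_max by apply: noMax.
    have h2 : (2 ^ k <= #|slice W L (q L)|)%N.
      by apply: factA => //; [apply: noMax | apply/set0Pn; exists q; rewrite /slice inE qW /=].
    have h3 : (2 ^ k <= #|slice W L j|)%N.
      by apply: factA => //; apply/set0Pn; exists p'.
    have := two_slices W L hqj; move: ht h2 h3; rewrite expnS.
    exact: ar2.
Qed.

Lemma syndrome_lin m r t : linear (@syndrome m r t).
Proof.
move=> a x y; apply/ffunP => c; rewrite !ffunE /= scaler_sumr -big_split /=.
apply: eq_bigr => b _; rewrite !ffunE mulrDr; congr (_ + _)%R.
by rewrite /GRing.scale /= mulrCA.
Qed.


Lemma memC m r t (x : {ffun Defs.coord m r t -> GF2^o}) : (x \in Ccode m r t) = (syndrome x == 0)%R.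
Proof.
pose flM := GRing.isLinear.Build _ _ _ _ (@syndrome m r t) (@syndrome_lin m r t).
pose fL : {linear _ -> _} := HB.pack (@syndrome m r t) flM.
by rewrite memv_ker (lfunE fL).
Qed.

Lemma gf2_dbl (a : GF2) : (a + a = 0)%R.
Proof. apply: addrr_pchar2; exact: pchar_Fp. Qed.
Lemma gf2_opp (a : GF2) : (- a = a)%R.
Proof. apply: oppr_pchar2; exact: pchar_Fp. Qed.
Lemma gf2_one : (1%R : GF2) != 0%R.
Proof. exact: oner_neq0. Qed.

Lemma sum_sub (R : nmodType) (T : finType) (A : {pred T}) (P : pred T) (F : T -> R) :
  (\sum_(c : {x | x \in A} | P (val c)) F (val c) = \sum_(x | (x \in A) && P x) F x)%R.
Proof.
rewrite (reindex_omap (fun c : {x | x \in A} => val c) insub).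
  apply: eq_bigl => c; rewrite valK eqxx andbT; by rewrite (valP c).
by move=> i /andP[iA _]; rewrite insubT.
Qed.

Lemma omega0P m r (v : word m r) : (v \in Omega m r 0) = [forall l, v l != ord_max].
Proof.
rewrite inOmega ?expn_gt0 // leqn0 /idxk sum_nat_eq0; apply: eq_forallb => i.
by rewrite ltn_ord muln_eq0 expn_eq0 orbF eqb0.
Qed.

Lemma omega_mono m r t t' (v : word m r) : (t' < 2 ^ m)%N -> (t <= t')%N ->
  v \in Omega m r t -> v \in Omega m r t'.
Proof.
move=> ht' htt; rewrite !inOmega //; first by move=> h; apply: leq_trans htt.
exact: leq_ltn_trans ht'.
Qed.

Lemma LsetP m r (a b : word m r) :
  (b \in Lset a) = [forall l, b l != ord_max] && [forall l, (a l != ord_max) ==> (b l == a l)].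
Proof. by rewrite inE; congr (_ && _); apply: eq_forallb => l; rewrite inE. Qed.

Lemma Lset_omega0 m r (a b : word m r) : b \in Lset a -> b \in Omega m r 0.
Proof. by rewrite LsetP omega0P => /andP[]. Qed.

Lemma Lset0 m r (a b : word m r) : a \in Omega m r 0 -> (b \in Lset a) = (b == a).
Proof.
rewrite omega0P => /forallP ha; rewrite LsetP; apply/idP/eqP => [/andP[_ /forallP h]|->].
  by apply/ffunP => l; apply/eqP; apply: (implyP (h l)); apply: ha.
by apply/andP; split; apply/forallP => l //; rewrite eqxx implybT.
Qed.

Lemma notLset_self m r (a : word m r) : a \notin Omega m r 0 -> a \notin Lset a.
Proof. by apply: contra; apply: Lset_omega0. Qed.

Lemma Lset_upd m r (p : word m r) l (j : 'I_r.+1) b : j != ord_max ->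
  (b \in Lset (upd p l j)) = (b \in Lset (upd p l ord_max)) && (b l == j).
Proof.
move=> hj; rewrite !LsetP -andbA; congr (_ && _).
apply/forallP/andP => [h|[/forallP h1 /eqP h2] k].
- split; last by have := h l; rewrite ffunE eqxx hj.
  apply/forallP => k; have := h k; rewrite !ffunE.
  by case: (eqVneq k l) => [->|hk]; rewrite ?eqxx.
- have := h1 k; rewrite !ffunE.
  by case: (eqVneq k l) => [->|hk] //; rewrite h2 => _; apply/implyP => _; apply/eqP.
Qed.

Lemma upd_omega m r t (p : word m r) l j : (t < 2 ^ m)%N ->
  upd p l ord_max \in Omega m r t -> upd p l j \in Omega m r t.
Proof.
move=> ht; rewrite !inOmega //.
have := idx_agree m (agree_upd (upd p l ord_max) l j).
have e : upd (upd p l ord_max) l j = upd p l j.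
  by apply/ffunP => k; rewrite !ffunE; case: eqP.
rewrite e ltn_ord /= !ffunE eqxx eqxx mul1n => h1 h2.
apply: leq_trans h2; rewrite -(leq_add2r (2 ^ l)) h1 leq_add2l.
by case: (_ == _); rewrite ?mul1n ?mul0n.
Qed.

Definition xw m r t (x : {ffun Defs.coord m r t -> GF2^o}) (w : word m r) : GF2 :=
  if insub w is Some c then x c else 0%R.

Lemma xw_val m r t (x : {ffun Defs.coord m r t -> GF2^o}) (c : Defs.coord m r t) :
  xw x (val c) = x c.
Proof. by rewrite /xw valK. Qed.

Lemma sum_subT (R : nmodType) (T : finType) (A : {pred T}) (F : T -> R) :
  (\sum_(c : {x | x \in A}) F (val c) = \sum_(x in A) F x)%R.
Proof.
rewrite (reindex_omap (fun c : {x | x \in A} => val c) insub).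
  apply: eq_bigl => c; rewrite valK eqxx andbT; by rewrite (valP c).
by move=> i iA; rewrite insubT.
Qed.

Lemma sum_subS (R : nmodType) (T : finType) (A : {pred T}) (F : T -> R) :
  (\sum_(c : {x | x \in A}) F (sval c) = \sum_(x in A) F x)%R.
Proof. exact: sum_subT. Qed.

Lemma code_id m r t (x : {ffun Defs.coord m r t -> GF2^o}) : (t < 2 ^ m)%N ->
  x \in Ccode m r t -> forall w, w \in Omega m r t ->
  xw x w = (\sum_(b | b \in Lset w) xw x b)%R.
Proof.
move=> ht xC w hw; case: (boolP (w \in Omega m r 0)) => h0.
  by rewrite (eq_bigl (pred1 w)) ?big_pred1_eq // => b; rewrite /= Lset0.
move: xC; rewrite memC => /eqP hs.
move/ffunP: hs => /(_ (Sub w hw)); rewrite /= !ffunE /=.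
rewrite (eq_bigr (fun b => Hmat t w (sval b) * xw x (sval b))%R); last by move=> b _; rewrite (xw_val x b).
rewrite (sum_subS _ (fun v => Hmat t w v * xw x v)%R).
have -> : (\sum_(v in Omega m r t) Hmat t w v * xw x v =
           \sum_(v | (v \in Lset w) || (v == w)) xw x v)%R.
  rewrite big_mkcond [RHS]big_mkcond; apply: eq_bigr => v _.
  rewrite /Hmat inE h0 hw /=.
  case: (boolP ((v \in Lset w) || (v == w))) => hv.
    have -> : v \in Omega m r t.
      case/orP: hv => [/Lset_omega0|/eqP -> //]; apply: omega_mono => //.
    by rewrite mul1r.
  by case: (v \in Omega m r t); rewrite /= ?mul0r.
rewrite (bigD1 w) ?eqxx ?orbT //=.
rewrite (eq_bigl (fun v => v \in Lset w)); last first.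
  move=> v /=; case: (eqVneq v w) => [->|]; last by rewrite orbF andbT.
  by rewrite (negbTE (notLset_self h0)).
by move/eqP; rewrite addr_eq0 gf2_opp => /eqP.
Qed.

Lemma line_sum m r t (x : {ffun Defs.coord m r t -> GF2^o}) p l : (t < 2 ^ m)%N ->
  x \in Ccode m r t -> upd p l ord_max \in Omega m r t ->
  (\sum_(j : 'I_r.+1) xw x (upd p l j) = 0)%R.
Proof.
move=> ht xC htop.
rewrite (eq_bigr (fun j => \sum_(b | b \in Lset (upd p l j)) xw x b))%R; last first.
  by move=> j _; apply: code_id => //; exact: upd_omega.
rewrite (bigD1 ord_max) //=.
rewrite (eq_bigr (fun j => \sum_(b | (b \in Lset (upd p l ord_max)) && (b l == j)) xw x b))%R; last first.
  by move=> j hj; apply: eq_bigl => b; exact: Lset_upd.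
rewrite (exchange_big_dep (fun b => b \in Lset (upd p l ord_max))) /=; last by move=> j b _ /andP[].
rewrite [X in (_ + X)%R](eq_bigr (fun b => xw x b)); first exact: gf2_dbl.
move=> b hb; rewrite (eq_bigl (fun j => j == b l)) ?big_pred1_eq // => j /=.
rewrite hb /=; move: hb; rewrite LsetP => /andP[/forallP /(_ l) hbl _].
by case: (eqVneq j (b l)) => [->|hne]; rewrite ?hbl ?andbF.
Qed.

Lemma agree_trans m r (p q w : word m r) l : agree p w l -> agree q w l -> agree p q l.
Proof.
move=> /forallP h1 /forallP h2; apply/forallP => k; apply/implyP => hk.
by rewrite (eqP (implyP (h1 k) hk)) (eqP (implyP (h2 k) hk)).
Qed.

Lemma sum_subP (R : nmodType) (T : finType) (A : {pred T}) (P : pred T) (F : T -> R) :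
  (\sum_(c : {x | x \in A} | P (sval c)) F (sval c) = \sum_(x | (x \in A) && P x) F x)%R.
Proof. exact: sum_sub. Qed.

Definition lineR m r t (i : Defs.coord m r t) (l : 'I_m) : {set Defs.coord m r t} :=
  [set q | (q != i) && agree (val q) (val i) l].

Lemma lineR_card m r t (i : Defs.coord m r t) l : (#|lineR i l| <= r)%N.
Proof.
rewrite -(card_in_imset (f := fun q : Defs.coord m r t => val q l)).
  apply: leq_trans (_ : #|[set~ val i l]| <= r)%N; last by rewrite cardsC1 card_ord.
  apply: subset_leq_card; apply/subsetP => j /imsetP[q]; rewrite !inE => /andP[qi aq] ->.
  apply/negP => /eqP e; move: qi; rewrite (val_inj (agree_eq aq e)) eqxx //.
move=> q1 q2; rewrite !inE => /andP[_ a1] /andP[_ a2] e.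
apply: val_inj; apply: agree_eq e; apply: agree_trans a1 a2.
Qed.

Lemma lineR_rec m r t (i : Defs.coord m r t) l : (t < 2 ^ m)%N ->
  upd (val i) l ord_max \in Omega m r t -> recovering_set (Ccode m r t) i (lineR i l).
Proof.
move=> ht htop; split; first by rewrite inE eqxx.
exists (fun _ => 1%R); split; first by move=> *; exact: gf2_one.
move=> x xC; set p := val i.
have hls := line_sum ht xC htop.
rewrite (bigD1 (p l)) //= upd_id /p xw_val in hls.
have -> : (\sum_(j in lineR i l) 1 * x j = \sum_(j | j != p l) xw x (upd p l j))%R.
  rewrite (eq_bigr (fun q => xw x (sval q)))%R; last by move=> q _; rewrite mul1r (xw_val x q).
  rewrite (eq_bigl (fun q : Defs.coord m r t => (sval q != p) && agree (sval q) p l)); last first.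
    by move=> q; rewrite inE.
  rewrite (sum_subP _ (fun v => (v != p) && agree v p l) (xw x)).
  have e1 : forall v, (v \in Omega m r t) && ((v != p) && agree v p l) ->
      xw x v = (\sum_(j | (j != p l) && (v == upd p l j)) xw x v)%R.
    move=> v /andP[_ /andP[vp av]].
    rewrite (eq_bigl (fun j => j == v l)) ?big_pred1_eq // => j /=.
    have vl : v l != p l by apply: contra vp => /eqP e; rewrite (agree_eq av e).
    case: (eqVneq j (v l)) => [->|hj]; first by rewrite vl /=; apply/eqP/agree_eq; [apply: agree_trans av (agree_upd p l (v l))| rewrite ffunE eqxx].
    apply/negbTE; apply/negP => /andP[_ /eqP e]; move: hj; rewrite e ffunE eqxx eqxx //.
  rewrite (eq_bigr _ e1) (exchange_big_dep (fun j => j != p l)) /=; last by move=> v j _ /andP[].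
  apply: eq_bigr => j hj; rewrite (eq_bigl (fun v => v == upd p l j)) ?big_pred1_eq // => v /=.
  case: (eqVneq v (upd p l j)) => [->|]; last by rewrite !andbF.
  rewrite upd_omega // agree_upd hj !andbT /=.
  by apply/negP => /eqP e; move: hj; rewrite -{1}e ffunE eqxx eqxx.
by move/eqP: hls; rewrite addr_eq0 gf2_opp => /eqP.
Qed.

Lemma syndrome_eq m r t (x : {ffun Defs.coord m r t -> GF2^o}) (a : Defs.coord m r t) :
  (t < 2 ^ m)%N ->
  syndrome x a = if val a \in Omega m r 0 then 0%R
                 else (xw x (val a) + \sum_(b | b \in Lset (val a)) xw x b)%R.
Proof.
move=> ht; rewrite ffunE; set w := val a; have hw : w \in Omega m r t := valP a.
case: (boolP (w \in Omega m r 0)) => h0.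
  by rewrite big1 // => b _; rewrite /Hmat inE h0 /= mul0r.
rewrite (eq_bigr (fun b => Hmat t w (sval b) * xw x (sval b))%R); last by move=> b _; rewrite (xw_val x b).
rewrite (sum_subS _ (fun v => Hmat t w v * xw x v)%R).
have -> : (\sum_(v in Omega m r t) Hmat t w v * xw x v =
           \sum_(v | (v \in Lset w) || (v == w)) xw x v)%R.
  rewrite big_mkcond [RHS]big_mkcond; apply: eq_bigr => v _.
  rewrite /Hmat inE h0 hw /=.
  case: (boolP ((v \in Lset w) || (v == w))) => hv.
    have -> : v \in Omega m r t.
      case/orP: hv => [/Lset_omega0|/eqP -> //]; apply: omega_mono => //.
    by rewrite mul1r.
  by case: (v \in Omega m r t); rewrite /= ?mul0r.
rewrite (bigD1 w) ?eqxx ?orbT //=; congr (_ + _)%R.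
apply: eq_bigl => v /=; case: (eqVneq v w) => [->|]; last by rewrite orbF andbT.
by rewrite (negbTE (notLset_self h0)).
Qed.

Lemma code_conv m r t (x : {ffun Defs.coord m r t -> GF2^o}) : (t < 2 ^ m)%N ->
  (forall w, w \in Omega m r t -> xw x w = \sum_(b | b \in Lset w) xw x b)%R ->
  x \in Ccode m r t.
Proof.
move=> ht h; rewrite memC; apply/eqP/ffunP => a; rewrite syndrome_eq // ffunE.
case: (_ \in _) => //; rewrite -h ?gf2_dbl //; exact: valP.
Qed.

Definition ext m r t (y : {ffun Defs.coord m r 0 -> GF2^o}) : {ffun Defs.coord m r t -> GF2^o} :=
  [ffun b => \sum_(c : Defs.coord m r 0 | sval c \in Lset (val b)) y c]%R.

Lemma ext_lin m r t : linear (@ext m r t).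
Proof.
move=> a x y; apply/ffunP => c; rewrite !ffunE /= scaler_sumr -big_split /=.
apply: eq_bigr => b _; rewrite !ffunE; congr (_ + _)%R.
Qed.

Lemma ext_w m r t (y : {ffun Defs.coord m r 0 -> GF2^o}) (b : Defs.coord m r t) :
  (t < 2 ^ m)%N ->
  ext t y b = (\sum_(v | v \in Lset (val b)) xw y v)%R.
Proof.
move=> ht; rewrite ffunE (eq_bigr (fun c => xw y (sval c))); last by move=> c _; rewrite (xw_val y c).
rewrite (sum_subP _ (fun v => v \in Lset (val b)) (xw y)); apply: eq_bigl => v.
by case: (boolP (v \in Lset _)) => h; rewrite ?andbF ?andbT // (Lset_omega0 h).
Qed.

Lemma xw_ext m r t (y : {ffun Defs.coord m r 0 -> GF2^o}) w : (t < 2 ^ m)%N ->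
  w \in Omega m r t -> xw (ext t y) w = (\sum_(v | v \in Lset w) xw y v)%R.
Proof. by move=> ht hw; rewrite /xw insubT ext_w. Qed.

Lemma ext_code m r t (y : {ffun Defs.coord m r 0 -> GF2^o}) : (t < 2 ^ m)%N ->
  ext t y \in Ccode m r t.
Proof.
move=> ht; apply: code_conv => // w hw; rewrite xw_ext //; apply: eq_bigr => v hv.
have hv0 := Lset_omega0 hv.
rewrite xw_ext //; last by apply: omega_mono hv0.
by rewrite (eq_bigl (pred1 v)) ?big_pred1_eq // => u; rewrite /= Lset0.
Qed.

Lemma ext_inj m r t : (t < 2 ^ m)%N -> injective (@ext m r t).
Proof.
move=> ht y1 y2 e; apply/ffunP => c.
have hc : sval c \in Omega m r t by apply: omega_mono (valP c).
have := congr1 (fun f => xw f (sval c)) e; rewrite /= !xw_ext //.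
have hL : forall u, (u \in Lset (sval c)) = (u == sval c) by move=> u; rewrite Lset0 // (valP c).
rewrite (eq_bigl _ _ hL) (eq_bigl _ _ hL) !big_pred1_eq.
by rewrite !(xw_val _ c).
Qed.

Lemma xw_ffun m r t (f : word m r -> GF2) v : v \in Omega m r t ->
  xw [ffun c : Defs.coord m r t => f (sval c)] v = f v.
Proof. by move=> hv; rewrite /xw insubT ffunE. Qed.

Lemma code_ext m r t (x : {ffun Defs.coord m r t -> GF2^o}) : (t < 2 ^ m)%N ->
  x \in Ccode m r t -> x = ext t [ffun c : Defs.coord m r 0 => xw x (sval c)].
Proof.
move=> ht xC; apply/ffunP => b; rewrite ext_w // -(xw_val x b) (code_id ht xC (valP b)).
by apply: eq_bigr => v hv; rewrite xw_ffun // (Lset_omega0 hv).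
Qed.

Lemma dimC m r t : (t < 2 ^ m)%N -> \dim (Ccode m r t) = #|{: Defs.coord m r 0}|.
Proof.
move=> ht.
pose eM := GRing.isLinear.Build _ _ _ _ (@ext m r t) (@ext_lin m r t).
pose eL : {linear _ -> _} := HB.pack (@ext m r t) eM.
have hE : Ccode m r t = (linfun eL @: fullv)%VS.
  apply/eqP; rewrite eqEsubv; apply/andP; split; apply/subvP => x.
  - move=> xC; apply/memv_imgP; exists [ffun c => xw x (sval c)]; first exact: memvf.
    by rewrite lfunE /= -code_ext.
  - by case/memv_imgP => y _ ->; rewrite lfunE; exact: ext_code.
rewrite hE limg_dim_eq ?dimvf.
  exact: muln1.
by rewrite capfv; apply/eqP/lker0P => y1 y2; rewrite !lfunE; apply: ext_inj.
Qed.


Lemma key_step m r t (E : {set Defs.coord m r t}) : (t < 2 ^ m)%N -> (#|E| <= t)%N -> E != set0 ->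
  exists i l, [/\ i \in E, upd (val i) l ord_max \in Omega m r t &
     forall q, q \in E -> q != i -> ~~ agree (val q) (val i) l].
Proof.
move=> ht hE hne.
set W := [set val q | q in E].
have hW : #|W| = #|E| by apply: card_imset; exact: val_inj.
have nc : ~ closedk m t W.
  move=> hc; have := @count_key m r m (leqnn m) t W ht.
  have hb : forall p, p \in W -> (idxk m p <= t)%N.
    by move=> p /imsetP[q _ ->]; rewrite -inOmega //; exact: valP.
  have hW0 : W != set0.
    by case/set0Pn: hne => q qE; apply/set0Pn; exists (val q); apply: imset_f.
  move=> /(_ hb hc hW0); rewrite hW ltnNge hE //.
apply: NNPP => H; apply: nc => p pW l _ hidx.
apply: NNPP => H2; apply: H.
case/imsetP: pW => i iE ep; subst p.
exists i, l; split => //; first by rewrite inOmega.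
move=> q qE qi; apply/negP => aq; apply: H2; exists (val q); first exact: imset_f.
by rewrite aq andbT; apply: contra qi => /eqP/val_inj ->.
Qed.

Lemma empty_rec m r t (E : {set Defs.coord m r t}) : E = set0 ->
  exists s : seq (Defs.coord m r t), [/\ uniq s, s =i E &
      forall (s1 s2 : seq _) (i : _), s = s1 ++ i :: s2 ->
        exists R : {set _},
          [/\ R \subset (~: E) :|: [set x in s1], (#|R| <= r)%N &
              recovering_set (Ccode m r t) i R]].
Proof. by move=> ->; exists [::]; split => // [x|[]//]; rewrite inE. Qed.

Lemma seqrec m r t : (t < 2 ^ m)%N -> seq_recoverable (Ccode m r t) r t.
Proof.
move=> ht E; move: {2}#|E| (leqnn #|E|) => n; elim: n E => [|n IH] E hn hE.
  by apply: empty_rec; apply/eqP; rewrite -cards_eq0 -leqn0.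
case: (eqVneq E set0) => [->|hne]; first exact: empty_rec.
have [i [l [iE htop hq]]] := key_step ht hE hne.
have hD : #|E| = (#|E :\ i|).+1 by rewrite (cardsD1 i E) iE.
have [||s' [us' es' hs']] := IH (E :\ i).
- by rewrite -ltnS -hD.
- by apply: leq_trans hE; rewrite hD.
exists (i :: s'); split.
- by rewrite /= us' andbT es' !inE eqxx.
- move=> x; rewrite inE es' !inE; case: (eqVneq x i) => [->|] //=.
- move=> [|y s1] s2 i0 /= [e1 e2].
  + subst i0; exists (lineR i l); split.
    * apply/subsetP => q; rewrite !inE => /andP[qi aq]; apply/orP; left.
      by apply/negP => qE; move: (hq q qE qi); rewrite aq.
    * exact: lineR_card.
    * exact: lineR_rec.
  + subst y; have [R [h1 h2 h3]] := hs' s1 s2 i0 e2; exists R; split => //.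
    apply: subset_trans h1 _; apply/subsetP => q; rewrite !inE.
    by case: (eqVneq q i) => [->|qi] /=; rewrite ?orbT.
Qed.

Lemma card_Gamma m r (S : {set 'I_m}) : #|[set a : word m r | Uset a == S]| = (r ^ #|~: S|)%N.
Proof.
pose F := fun x : 'I_m => if x \in S then pred1 (ord_max : 'I_r.+1) else predC1 (ord_max : 'I_r.+1).
have -> : #|[set a : word m r | Uset a == S]| = #|family F|.
  apply: eq_card => a; rewrite inE; apply/eqP/familyP => [e x|h].
    by rewrite /F -e inE; case: eqP => [->|/eqP h]; rewrite !inE ?eqxx.
  rewrite /Uset; apply/setP => x; rewrite inE; have := h x; rewrite /F.
  by case: (x \in S); rewrite !inE; [move=> -> | move/negbTE].
rewrite card_family.
have e : forall (s : seq 'I_m), foldr muln 1 [seq #|F x| | x <- s] = (\prod_(x <- s) #|F x|)%N.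
  by elim=> [|x s IH]; rewrite ?big_nil ?big_cons //= IH.
rewrite e big_enum /= (bigID (fun x => x \in S)) /= big1; last first.
  by move=> x xS; rewrite /F xS card1.
rewrite mul1n (eq_bigr (fun _ => r)); last by move=> x xS; rewrite /F (negbTE xS) cardC1 card_ord.
rewrite prod_nat_const; congr (_ ^ _)%N; apply: eq_card => x; rewrite !inE.
done.
Qed.

Lemma cardC_ord m (S : {set 'I_m}) : #|~: S| = (m - #|S|)%N.
Proof. have h := cardsC S; rewrite card_ord in h; lia. Qed.

Lemma card_Gamma' m r s : #|Gamma m r s| = (r ^ (m - #|supp m s|))%N.
Proof. by rewrite /Gamma card_Gamma cardC_ord. Qed.

Lemma card_Omega m r t : (t < 2 ^ m)%N ->
  #|Omega m r t| = (\sum_(s < t.+1) r ^ (m - #|supp m s|))%N.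
Proof.
elim: t => [|t IH] ht.
  by rewrite /Omega big_ord1 big_ord1 card_Gamma'.
rewrite /Omega big_ord_recr /= (eq_bigr (fun i : 'I_t.+1 => Gamma m r i)) //.
rewrite -/(Omega m r t) cardsU.
have -> : Omega m r t :&: Gamma m r t.+1 = set0.
  apply/setP => w; rewrite !inE; apply/negP => /andP[h1 h2].
  move: h1; rewrite inOmega ?(ltnW ht) //.
  move: h2 => /eqP/(idx_supp ht) ->; by rewrite ltnn.
by rewrite cards0 subn0 big_ord_recr /= IH ?(ltnW ht) // card_Gamma'.
Qed.

Unset Implicit Arguments.
Local Open Scope ring_scope.

Theorem theorem2 (r t m : nat) :
  (2 <= r)%N -> (1 <= t)%N -> (0 < m)%N -> (t <= 2 ^ m - 1)%N ->
  exists n : nat,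
    [/\ n%:R = (r ^ m)%:R * \sum_(s < t.+1) ((r ^ #|supp m s|)%:R)^-1 :> rat,
        is_SLRC (Ccode m r t) n (r ^ m) r t &
        (r ^ m)%:R / n%:R = (\sum_(s < t.+1) ((r ^ #|supp m s|)%:R)^-1)^-1 :> rat].
Proof.
move=> hr _ _ htm.
have ht : (t < 2 ^ m)%N by move: htm; have := expn_gt0 2 m; lia.
have hr0 : forall k, ((r ^ k)%:R : rat) != 0 by move=> k; rewrite pnatr_eq0 expn_eq0; apply/nandP; left; rewrite -lt0n (leq_trans _ hr).
have hn : (#|Omega m r t|%:R : rat) = (r ^ m)%:R * \sum_(s < t.+1) ((r ^ #|supp m s|)%:R)^-1.
  rewrite card_Omega // natr_sum mulr_sumr; apply: eq_bigr => s _.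
  have hs : (#|supp m s| <= m)%N by rewrite -[X in (_ <= X)%N](card_ord m) max_card.
  apply: (mulIf (hr0 #|supp m s|)); rewrite -mulrA mulVf // mulr1 -natrM -expnD subnK //.
exists #|Omega m r t|; split => //.
- split.
  + by rewrite card_sig.
  + rewrite dimC // card_sig.
    have -> : #|[pred x | x \in Omega m r 0]| = #|Omega m r 0| by [].
    rewrite card_Omega ?expn_gt0 // big_ord1 /=.
    have -> : supp m 0 = set0 by apply/setP => l; rewrite !inE div0n.
    by rewrite cards0 subn0.
  + exact: seqrec.
- by rewrite hn invfM mulrA mulfV // mul1r.
Qed.
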